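(* Let $\mathsf R\subseteq\{\mathsf e,\mathsf c\}$. Every member of $\mathsf{RLUG}_{\mathsf R}$ is a subalgebra of the $\{\wedge,\vee,\cdot,\backslash,/,1\}$-reduct of some member of $\mathsf{CyInRLUG}_{\mathsf R}$.
   Context: An $r\ell u$-groupoid is an algebra $(A,\wedge,\vee,\cdot,\backslash,/,1)$ with $(A,\wedge,\vee)$ a lattice (order $\le$), $(A,\cdot,1)$ a unital groupoid (binary operation, not necessarily associative, with two-sided unit $1$), and $x\cdot y\le z\iff y\le x\backslash z\iff x\le z/y$. An $r\ell uz$-groupoid is an $r\ell u$-groupoid with an additional arbitrary constant $0$; write ${\sim}x:=x\backslash 0$, $-x:=0/x$. It is involutive if ${\sim}(-x)=x=-({\sim}x)$ and $({\sim}x)/y=x\backslash(-y)$ for all $x,y$; cyclic involutive if moreover ${\sim}x=-x$. Equations: $(\mathsf e)$ $x\cdot y\le y\cdot x$; $(\mathsf c)$ $x\le x\cdot x$. $\mathsf{RLUG}_{\mathsf R}$ is the variety of $r\ell u$-groupoids satisfying $\mathsf R$; $\mathsf{CyInRLUG}_{\mathsf R}$ the variety of cyclic involutive $r\ell uz$-groupoids satisfying $\mathsf R$. The $\mathcal N$-reduct of an algebra forgets the operations outside $\mathcal N$. *)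

(* Defs.v *)
Set Implicit Arguments.

Record rlu_ops (A : Type) := RluOps {
  meet : A -> A -> A;
  join : A -> A -> A;
  mul  : A -> A -> A;
  ldiv : A -> A -> A;
  rdiv : A -> A -> A;
  one  : A
}.

Definition le {A} (o : rlu_ops A) (x y : A) : Prop := meet o x y = x.

Definition is_lattice {A} (o : rlu_ops A) : Prop :=
  (forall x y, meet o x y = meet o y x) /\
  (forall x y, join o x y = join o y x) /\
  (forall x y z, meet o x (meet o y z) = meet o (meet o x y) z) /\
  (forall x y z, join o x (join o y z) = join o (join o x y) z) /\
  (forall x y, meet o x (join o x y) = x) /\
  (forall x y, join o x (meet o x y) = x).

Definition is_rlu {A} (o : rlu_ops A) : Prop :=
  is_lattice o /\
  (forall x, mul o (one o) x = x) /\
  (forall x, mul o x (one o) = x) /\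
  (forall x y z, (le o (mul o x y) z <-> le o y (ldiv o x z)) /\
                 (le o (mul o x y) z <-> le o x (rdiv o z y))).

(* Equations in R ⊆ {e, c}: re = (e ∈ R), rc = (c ∈ R). *)
Definition eq_e {A} (o : rlu_ops A) : Prop := forall x y, le o (mul o x y) (mul o y x).
Definition eq_c {A} (o : rlu_ops A) : Prop := forall x, le o x (mul o x x).

Definition sat_R (re rc : bool) {A} (o : rlu_ops A) : Prop :=
  (re = true -> eq_e o) /\ (rc = true -> eq_c o).

Definition lneg {A} (o : rlu_ops A) (z : A) (x : A) : A := ldiv o x z.
Definition rneg {A} (o : rlu_ops A) (z : A) (x : A) : A := rdiv o z x.

Definition is_involutive {A} (o : rlu_ops A) (z : A) : Prop :=
  (forall x, lneg o z (rneg o z x) = x /\ rneg o z (lneg o z x) = x) /\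
  (forall x y, rdiv o (lneg o z x) y = ldiv o x (rneg o z y)).

Definition is_cyinv {A} (o : rlu_ops A) (z : A) : Prop :=
  is_rlu o /\ is_involutive o z /\ (forall x, lneg o z x = rneg o z x).

Definition is_embedding {A B} (oA : rlu_ops A) (oB : rlu_ops B) (f : A -> B) : Prop :=
  (forall x y, f x = f y -> x = y) /\
  (forall x y, f (meet oA x y) = meet oB (f x) (f y)) /\
  (forall x y, f (join oA x y) = join oB (f x) (f y)) /\
  (forall x y, f (mul oA x y) = mul oB (f x) (f y)) /\
  (forall x y, f (ldiv oA x y) = ldiv oB (f x) (f y)) /\
  (forall x y, f (rdiv oA x y) = rdiv oB (f x) (f y)) /\
  f (one oA) = one oB.

(* Main.v *)
Require Import Defs.
From Stdlib Require Import Eqdep_dec Bool Setoid.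
Set Implicit Arguments.

Section Gen.
Variables (L : Type) (o : rlu_ops L) (H : is_rlu o).

Lemma lat : is_lattice o. Proof. apply H. Qed.
Lemma mC x y : meet o x y = meet o y x. Proof. apply lat. Qed.
Lemma jC x y : join o x y = join o y x. Proof. apply lat. Qed.
Lemma mA x y z : meet o x (meet o y z) = meet o (meet o x y) z. Proof. apply lat. Qed.
Lemma jA x y z : join o x (join o y z) = join o (join o x y) z. Proof. apply lat. Qed.
Lemma ab1 x y : meet o x (join o x y) = x. Proof. apply lat. Qed.
Lemma ab2 x y : join o x (meet o x y) = x. Proof. apply lat. Qed.
Lemma u1 x : mul o (one o) x = x. Proof. apply H. Qed.
Lemma u2 x : mul o x (one o) = x. Proof. apply H. Qed.
Lemma resl x y z : le o (mul o x y) z <-> le o y (ldiv o x z). Proof. apply H. Qed.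
Lemma resr x y z : le o (mul o x y) z <-> le o x (rdiv o z y). Proof. apply H. Qed.

Lemma mI x : meet o x x = x.
Proof. transitivity (meet o x (join o x (meet o x x))). now rewrite ab2. apply ab1. Qed.
Lemma jI x : join o x x = x.
Proof. transitivity (join o x (meet o x (join o x x))). now rewrite ab1. apply ab2. Qed.
Lemma le_refl x : le o x x. Proof. apply mI. Qed.
Lemma le_anti x y : le o x y -> le o y x -> x = y.
Proof. unfold le; intros h1 h2. rewrite <- h1, mC. exact h2. Qed.
Lemma le_trans x y z : le o x y -> le o y z -> le o x z.
Proof. unfold le; intros h1 h2. rewrite <- h1, <- mA, h2. reflexivity. Qed.
Lemma le_ml y z : le o (meet o y z) y.
Proof. unfold le. rewrite (mC (meet o y z) y), mA, mI. reflexivity. Qed.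
Lemma le_mr y z : le o (meet o y z) z.
Proof. unfold le. rewrite <- mA, mI. reflexivity. Qed.
Lemma le_meet x y z : le o x (meet o y z) <-> le o x y /\ le o x z.
Proof.
  split.
  - intro h. split. eapply le_trans. exact h. apply le_ml.
    eapply le_trans. exact h. apply le_mr.
  - unfold le. intros [h1 h2]. rewrite mA, h1, h2. reflexivity.
Qed.
Lemma le_join x y : le o x y <-> join o x y = y.
Proof.
  unfold le; split; intro h.
  - rewrite <- h, jC, mC. apply ab2.
  - rewrite <- h. apply ab1.
Qed.
Lemma yoneda u v : (forall w, le o w u <-> le o w v) -> u = v.
Proof.
  intro h. apply le_anti. apply h, le_refl. apply h, le_refl.
Qed.
Lemma rdiv1 d : rdiv o d (one o) = d.
Proof. apply yoneda; intro w. rewrite <- resr, u2. tauto. Qed.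
Lemma ldiv1 d : ldiv o (one o) d = d.
Proof. apply yoneda; intro w. rewrite <- resl, u1. tauto. Qed.

Lemma e_comm : eq_e o -> forall x y, mul o x y = mul o y x.
Proof. intros he x y. apply le_anti; apply he. Qed.
Lemma e_div : eq_e o -> forall x y, ldiv o x y = rdiv o y x.
Proof.
  intros he x y. apply yoneda; intro w. rewrite <- resl, <- resr, (e_comm he). tauto.
Qed.

Variable T : L.
Hypothesis HT : forall x, le o x T.
Lemma ldivT a : ldiv o a T = T.
Proof. apply le_anti. apply HT. apply resl, HT. Qed.
Lemma rdivT a : rdiv o T a = T.
Proof. apply le_anti. apply HT. apply resr, HT. Qed.
Lemma meetT b : meet o T b = b.
Proof. rewrite mC. apply HT. Qed.

Definition tw : rlu_ops (L * L) := RluOps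
  (fun p q => (meet o (fst p) (fst q), join o (snd p) (snd q)))
  (fun p q => (join o (fst p) (fst q), meet o (snd p) (snd q)))
  (fun p q => (mul o (fst p) (fst q),
               meet o (ldiv o (fst q) (snd p)) (rdiv o (snd q) (fst p))))
  (fun p q => (meet o (ldiv o (fst p) (fst q)) (rdiv o (snd p) (snd q)),
               mul o (snd q) (fst p)))
  (fun q p => (meet o (rdiv o (fst q) (fst p)) (ldiv o (snd q) (snd p)),
               mul o (fst p) (snd q)))
  (one o, T).

Lemma tle p q : le tw p q <-> le o (fst p) (fst q) /\ le o (snd q) (snd p).
Proof.
  destruct p as [a b], q as [c d]. unfold le; simpl.
  split.
  - intro h. injection h; intros h2 h1. split. exact h1.
    apply le_join. rewrite jC. exact h2.
  - intros [h1 h2]. apply le_join in h2. rewrite jC in h2.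
    unfold le in h1. rewrite h1, h2. reflexivity.
Qed.

Lemma tw_rlu : is_rlu tw.
Proof.
  split; [|split; [|split]].
  - repeat split; intros [? ?]; try intros [? ?]; try intros [? ?]; simpl; f_equal;
      first [apply mC | apply jC | apply mA | apply jA | apply ab1 | apply ab2].
  - intros [c d]; simpl. rewrite u1, ldivT, rdiv1, meetT. reflexivity.
  - intros [a b]; simpl. rewrite u2, ldiv1, rdivT, mC, meetT. reflexivity.
  - intros [a b] [x y] [c d]. rewrite !tle; simpl. rewrite !le_meet.
    rewrite <- !resl, <- !resr. split; tauto.
Qed.

Definition tz : L * L := (T, one o).

Lemma tw_neg p : lneg tw tz p = (snd p, fst p) /\ rneg tw tz p = (snd p, fst p).
Proof.
  destruct p as [a b]; unfold lneg, rneg, tz; simpl.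
  rewrite ldivT, rdiv1, meetT, u1, rdivT, ldiv1, meetT, u2. auto.
Qed.

Lemma tw_cyinv : is_cyinv tw tz.
Proof.
  split; [apply tw_rlu|split].
  - split.
    + intros p. destruct (tw_neg p) as [h1 h2].
      rewrite h1, h2. destruct (tw_neg (snd p, fst p)) as [h3 h4].
      rewrite h3, h4. destruct p; auto.
    + intros p q. destruct (tw_neg p) as [h1 _]. destruct (tw_neg q) as [_ h2].
      rewrite h1, h2. destruct p, q; simpl. f_equal. apply mC.
  - intro p. destruct (tw_neg p) as [h1 h2]. now rewrite h1, h2.
Qed.

Lemma tw_e : eq_e o -> eq_e tw.
Proof.
  intros he [a b] [c d]. apply tle; simpl. split.
  - rewrite (e_comm he). apply le_refl.
  - rewrite !(e_div he), mC. apply le_refl.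
Qed.
End Gen.
Unset Implicit Arguments.

Inductive ext (A : Type) := Bt | In (a : A) | Tp.
Arguments Bt {A}. Arguments Tp {A}. Arguments In {A} a.

Section Ext.
Variables (A : Type) (o : rlu_ops A) (H : is_rlu o).

Definition meetE (x y : ext A) : ext A :=
  match x, y with
  | Bt, _ => Bt | _, Bt => Bt | Tp, y => y | x, Tp => x
  | In a, In b => In (meet o a b) end.
Definition joinE (x y : ext A) : ext A :=
  match x, y with
  | Tp, _ => Tp | _, Tp => Tp | Bt, y => y | x, Bt => x
  | In a, In b => In (join o a b) end.
Definition mulE (x y : ext A) : ext A :=
  match x, y with
  | Bt, _ => Bt | _, Bt => Bt | Tp, _ => Tp | _, Tp => Tp
  | In a, In b => In (mul o a b) end.
Definition ldivE (x y : ext A) : ext A :=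
  match x, y with
  | Bt, _ => Tp | _, Tp => Tp | Tp, _ => Bt | In _, Bt => Bt
  | In a, In b => In (ldiv o a b) end.
Definition rdivE (y x : ext A) : ext A :=
  match y, x with
  | _, Bt => Tp | Tp, _ => Tp | _, Tp => Bt | Bt, In _ => Bt
  | In b, In a => In (rdiv o b a) end.

Definition oE : rlu_ops (ext A) := RluOps meetE joinE mulE ldivE rdivE (In (one o)).

Definition leP (x y : ext A) : Prop :=
  match x, y with
  | Bt, _ => True | _, Tp => True | In a, In b => le o a b | _, _ => False end.

Lemma leE x y : le oE x y <-> leP x y.
Proof.
  unfold le; destruct x, y; simpl; split; intro h; try discriminate; auto;
    try (injection h; auto); try (rewrite h; auto); try contradiction.
Qed.

Lemma oE_lat : is_lattice oE.
Proof.
  repeat split; intros; simpl;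
  repeat match goal with x : ext A |- _ => destruct x end; simpl; try reflexivity;
  f_equal; first [apply (mC H) | apply (jC H) | apply (mA H) | apply (jA H)
     | apply (ab1 H) | apply (ab2 H) | apply (mI H) | apply (jI H)].
Qed.

Lemma oE_rlu : is_rlu oE.
Proof.
  split; [apply oE_lat | split; [|split]].
  - intro x; destruct x; simpl; auto. rewrite (u1 H); auto.
  - intro x; destruct x; simpl; auto. rewrite (u2 H); auto.
  - intros x y z. rewrite !leE.
    destruct x, y, z; simpl; try tauto; split; [apply (resl H)| apply (resr H)].
Qed.

Lemma oE_top x : le oE x Tp.
Proof. apply leE. destruct x; simpl; auto. Qed.

Lemma oE_e : eq_e o -> eq_e oE.
Proof.
  intros he x y. apply leE. destruct x, y; simpl; auto; apply he.
Qed.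
Lemma oE_c : eq_c o -> eq_c oE.
Proof.
  intros hc x. apply leE. destruct x; simpl; auto; apply hc.
Qed.
End Ext.

Section S.
Variables (A : Type) (o : rlu_ops A) (H : is_rlu o).

Definition O := tw (oE A o) Tp.
Definition isTp (x : ext A) : bool := match x with Tp => true | _ => false end.
Definition good (p : ext A * ext A) : bool := isTp (fst p) || isTp (snd p).

Ltac clos := intros [a b] [c d]; destruct a, b, c, d; simpl; intros; try discriminate; reflexivity.
Lemma cl_meet p q : good p = true -> good q = true -> good (meet O p q) = true. Proof. revert p q; clos. Qed.
Lemma cl_join p q : good p = true -> good q = true -> good (join O p q) = true. Proof. revert p q; clos. Qed.
Lemma cl_mul p q : good p = true -> good q = true -> good (mul O p q) = true. Proof. revert p q; clos. Qed.
Lemma cl_ldiv p q : good p = true -> good q = true -> good (ldiv O p q) = true. Proof. revert p q; clos. Qed.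
Lemma cl_rdiv p q : good p = true -> good q = true -> good (rdiv O p q) = true. Proof. revert p q; clos. Qed.

Definition S := {p : ext A * ext A | good p = true}.
Definition lift (op : ext A * ext A -> ext A * ext A -> ext A * ext A)
  (cl : forall p q, good p = true -> good q = true -> good (op p q) = true)
  (x y : S) : S := exist _ (op (proj1_sig x) (proj1_sig y)) (cl _ _ (proj2_sig x) (proj2_sig y)).
Definition oS : rlu_ops S := RluOps (@lift (meet O) cl_meet) (@lift (join O) cl_join) (@lift (mul O) cl_mul)
  (@lift (ldiv O) cl_ldiv) (@lift (rdiv O) cl_rdiv) (exist _ (In (one o), Tp) eq_refl).
Definition zS : S := exist _ (Tp, In (one o)) eq_refl.

Lemma val_inj (x y : S) : proj1_sig x = proj1_sig y -> x = y.
Proof.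
  destruct x as [x gx], y as [y gy]; simpl; intro e; subst.
  f_equal. apply UIP_dec, bool_dec.
Qed.

Lemma v_meet x y : proj1_sig (meet oS x y) = meet O (proj1_sig x) (proj1_sig y). Proof. reflexivity. Qed.
Lemma v_join x y : proj1_sig (join oS x y) = join O (proj1_sig x) (proj1_sig y). Proof. reflexivity. Qed.
Lemma v_mul x y : proj1_sig (mul oS x y) = mul O (proj1_sig x) (proj1_sig y). Proof. reflexivity. Qed.
Lemma v_ldiv x y : proj1_sig (ldiv oS x y) = ldiv O (proj1_sig x) (proj1_sig y). Proof. reflexivity. Qed.
Lemma v_rdiv x y : proj1_sig (rdiv oS x y) = rdiv O (proj1_sig x) (proj1_sig y). Proof. reflexivity. Qed.
Lemma v_one : proj1_sig (one oS) = one O. Proof. reflexivity. Qed.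
Lemma v_z : proj1_sig zS = tz (oE A o) Tp. Proof. reflexivity. Qed.

Lemma leS x y : le oS x y <-> le O (proj1_sig x) (proj1_sig y).
Proof.
  unfold le; split; intro h.
  - rewrite <- v_meet, h. reflexivity.
  - apply val_inj. rewrite v_meet. exact h.
Qed.

Definition HO : is_rlu O := tw_rlu (oE_rlu A o H) (oE_top A o).
Definition HC : is_cyinv O (tz (oE A o) Tp) := tw_cyinv (oE_rlu A o H) (oE_top A o).

Ltac vs := apply val_inj; rewrite ?v_meet, ?v_join, ?v_mul, ?v_ldiv, ?v_rdiv, ?v_one, ?v_z.

Lemma oS_cyinv : is_cyinv oS zS.
Proof.
  destruct HC as [_ [[i1 i2] cy]].
  split; [split; [|split; [|split]]|split; [split|]].
  - repeat split; intros; vs;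
      first [apply (mC HO) | apply (jC HO) | apply (mA HO) | apply (jA HO)
            | apply (ab1 HO) | apply (ab2 HO)].
  - intro x; vs. apply (u1 HO).
  - intro x; vs. apply (u2 HO).
  - intros x y z. rewrite !leS, !v_mul, v_ldiv, v_rdiv.
    split; [apply (resl HO) | apply (resr HO)].
  - intro x. unfold lneg, rneg. split; vs; apply (i1 (proj1_sig x)).
  - intros x y. unfold lneg, rneg. vs. apply (i2 (proj1_sig x) (proj1_sig y)).
  - intro x. unfold lneg, rneg. vs. apply (cy (proj1_sig x)).
Qed.

Lemma oS_e : eq_e o -> eq_e oS.
Proof.
  intros he x y. rewrite leS, !v_mul. apply (tw_e (oE_rlu A o H) Tp (oE_e A o he)).
Qed.

Lemma oS_c : eq_c o -> eq_c oS.
Proof.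
  intros hc [[a b] g]. rewrite leS, v_mul. simpl proj1_sig.
  apply (tle (oE_rlu A o H)). simpl. rewrite !leE.
  destruct a, b; simpl in *; try discriminate; split; auto; apply hc.
Qed.

Definition fS (a : A) : S := exist _ (In a, Tp) eq_refl.

Lemma fS_emb : is_embedding o oS fS.
Proof.
  split.
  - intros x y h. apply (f_equal (@proj1_sig _ _)) in h. simpl in h.
    injection h; auto.
  - repeat split; intros; vs; reflexivity.
Qed.
End S.

Theorem mainTheorem12 :
  forall (re rc : bool) (A : Type) (oA : rlu_ops A),
    is_rlu oA -> sat_R re rc oA ->
    exists (B : Type) (oB : rlu_ops B) (z : B),
      is_cyinv oB z /\ sat_R re rc oB /\
      exists f : A -> B, is_embedding oA oB f.
Proof.
  intros re rc A oA H [he hc].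
  exists (S A), (oS A oA), (zS A oA). split; [apply oS_cyinv; exact H|split].
  - split; intro h. apply oS_e; auto. apply oS_c; auto.
  - exists (fS A). apply fS_emb.
Qed.
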